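(* Every polyhedral loss $L:\mathbb{R}^d\to\mathbb{R}^{\mathcal{Y}}_+$ embeds some discrete loss.
   Context: $\mathcal{Y}$ is a finite set of labels; $\mathbb{R}^{\mathcal{Y}}_+$ is the nonnegative orthant; $\Delta_{\mathcal{Y}}$ is the probability simplex on $\mathcal{Y}$. A loss is a map $L:\mathcal{R}\to\mathbb{R}^{\mathcal{Y}}_+$; expected loss under $p$ is $\langle p,L(r)\rangle$. A loss is discrete if its report set $\mathcal{R}$ is finite. $L:\mathbb{R}^d\to\mathbb{R}^{\mathcal{Y}}_+$ is polyhedral if each coordinate $u\mapsto L(u)_y$ is a pointwise maximum of finitely many affine functions. $L$ is minimizable if $\inf_r\langle p,L(r)\rangle$ is attained for all $p\in\Delta_{\mathcal{Y}}$; then $\mathrm{prop}[L](p)=\arg\min_r\langle p,L(r)\rangle$. $\mathcal{S}\subseteq\mathcal{R}$ is representative for a minimizable loss $L$ if $\mathrm{prop}[L](p)\cap\mathcal{S}\neq\emptyset$ for all $p$. A minimizable $L:\mathbb{R}^d\to\mathbb{R}^{\mathcal{Y}}_+$ embeds $\ell:\mathcal{R}\to\mathbb{R}^{\mathcal{Y}}_+$ if there exist a representative set $\mathcal{S}$ for $\ell$ and an injective $\varphi:\mathcal{S}\to\mathbb{R}^d$ with (i) $L(\varphi(r))=\ell(r)$ for all $r\in\mathcal{S}$ and (ii) for all $p\in\Delta_{\mathcal{Y}}$, $r\in\mathcal{S}$: $r\in\mathrm{prop}[\ell](p)\iff\varphi(r)\in\mathrm{prop}[L](p)$. *)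

(* Defs.v *)
From mathcomp Require Import all_boot all_order all_algebra.
From mathcomp Require Import reals.
Set Implicit Arguments. Unset Strict Implicit. Unset Printing Implicit Defensive.
Import Order.TTheory GRing.Theory Num.Theory.
Local Open Scope ring_scope.

Section Losses.
Variables (R : realType) (Y : finType).

Definition simplex (p : Y -> R) : Prop :=
  (forall y, 0 <= p y) /\ \sum_(y : Y) p y = 1.

Definition eloss (p : Y -> R) (v : Y -> R) : R := \sum_(y : Y) p y * v y.

Definition in_prop {Rep : Type} (L : Rep -> Y -> R) (p : Y -> R) (r : Rep) : Prop :=
  forall r' : Rep, eloss p (L r) <= eloss p (L r').

Definition minimizable {Rep : Type} (L : Rep -> Y -> R) : Prop :=
  forall p, simplex p -> exists r : Rep, in_prop L p r.

Definition representative {Rep : Type} (L : Rep -> Y -> R) (S : Rep -> Prop) : Prop :=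
  forall p, simplex p -> exists r, S r /\ in_prop L p r.

Definition embeds (d : nat) (L : ('I_d -> R) -> Y -> R) {Rep : Type}
    (ell : Rep -> Y -> R) : Prop :=
  minimizable L /\
  exists (S : Rep -> Prop) (phi : Rep -> ('I_d -> R)),
    representative ell S /\
    (forall r1 r2, S r1 -> S r2 -> phi r1 = phi r2 -> r1 = r2) /\
    (forall r, S r -> forall y, L (phi r) y = ell r y) /\
    (forall p r, simplex p -> S r -> (in_prop ell p r <-> in_prop L p (phi r))).

Definition polyhedral (d : nat) (L : ('I_d -> R) -> Y -> R) : Prop :=
  forall y : Y, exists (n : nat) (a : 'I_n.+1 -> 'I_d -> R) (b : 'I_n.+1 -> R),
    forall u : 'I_d -> R,
      (forall i, \sum_(k < d) a i k * u k + b i <= L u y) /\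
      (exists i, L u y = \sum_(k < d) a i k * u k + b i).

End Losses.

(* Main.v *)
Require Import Defs.
From mathcomp Require Import all_boot all_order all_algebra.
From mathcomp Require Import reals.
From mathcomp Require Import boolp lra.
Import Order.TTheory GRing.Theory Num.Theory.
Local Open Scope ring_scope.
Set Implicit Arguments. Unset Strict Implicit. Unset Printing Implicit Defensive.

Lemma fin_min (R : realType) (T : finType) (P : T -> Prop) (F : T -> R) :
  (exists x, P x) -> exists x, P x /\ forall y, P y -> F x <= F y.
Proof.
move=> [x0 Px0].
have Px0' : (fun x => `[< P x >]) x0 by apply/asboolP.
case: (@arg_minP _ _ T x0 (fun x => `[< P x >]) F Px0') => x /asboolP Px H.
by exists x; split => // y /asboolP /H.
Qed.

Section Core.
Variables (R : realType) (Y : finType) (d N : nat).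
Variable a : Y -> 'I_N.+1 -> 'I_d -> R.
Variable b : Y -> 'I_N.+1 -> R.
Variable L : ('I_d -> R) -> Y -> R.

Definition dot (x v : 'I_d -> R) := \sum_(k < d) x k * v k.
Definition aff y i (u : 'I_d -> R) := dot (a y i) u + b y i.

Hypothesis Hnn : forall u y, 0 <= L u y.
Hypothesis Hle : forall u y i, aff y i u <= L u y.
Hypothesis Hex : forall u y, exists i, L u y = aff y i u.

Definition vadd (u : 'I_d -> R) t (w : 'I_d -> R) := fun k => u k + t * w k.

Lemma dot_vadd x u t w : dot x (vadd u t w) = dot x u + t * dot x w.
Proof.
rewrite /dot /vadd mulr_sumr -big_split; apply: eq_bigr => k _.
by rewrite mulrDr mulrCA.
Qed.

Lemma dot_opp x w : dot x (fun k => - w k) = - dot x w.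
Proof. by rewrite /dot -sumrN; apply: eq_bigr => k _; rewrite mulrN. Qed.

Lemma aff_vadd y i u t w : aff y i (vadd u t w) = aff y i u + t * dot (a y i) w.
Proof. by rewrite /aff dot_vadd addrAC. Qed.

Definition act u : {set Y * 'I_N.+1} := [set k | L u k.1 == aff k.1 k.2 u].

Lemma actP u y i : ((y, i) \in act u) = (L u y == aff y i u).
Proof. by rewrite inE. Qed.

Definition Wof (P : {set Y * 'I_N.+1}) v := forall y i j,
  (y,i) \in P -> (y,j) \in P -> dot (a y i) v = dot (a y j) v.
Definition Lam v := forall y i j, dot (a y i) v = dot (a y j) v.
Definition vertex u := forall v, Wof (act u) v -> Lam v.

Lemma L_inv u w t y : Lam w -> L (vadd u t w) y = L u y.
Proof.
move=> Hw.
set c := dot (a y ord0) w.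
have key : forall s, L (vadd u s w) y = L u y + s * c.
  move=> s; apply/eqP; rewrite eq_le; apply/andP; split.
  - have [j ->] := Hex (vadd u s w) y.
    by rewrite aff_vadd (Hw y j ord0) lerD2r Hle.
  - have [i ->] := Hex u y.
    by rewrite /c -(Hw y i ord0) -aff_vadd Hle.
have c0 : c = 0.
  apply/eqP; apply/negPn/negP => cn0.
  have := Hnn (vadd u (- (L u y + 1) / c) w) y.
  rewrite key divfK //; lra.
by rewrite key c0 mulr0 addr0.
Qed.

Lemma vertex_same u u' y : vertex u -> act u \subset act u' -> L u' y = L u y.
Proof.
move=> vu /subsetP sub.
set w := fun k => u' k - u k.
have dsub x : dot x w = dot x u' - dot x u.
  by rewrite /dot -sumrB; apply: eq_bigr => k _; rewrite mulrBr.
have Ww : Wof (act u) w.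
  move=> y0 i j Hi Hj.
  have Hi' := sub _ Hi; have Hj' := sub _ Hj.
  move: Hi Hj Hi' Hj'; rewrite !actP /aff => /eqP Hi /eqP Hj /eqP Hi' /eqP Hj'.
  rewrite !dsub; lra.
have -> : u' = vadd u 1 w by apply: funext => k; rewrite /vadd /w mul1r addrC subrK.
apply: L_inv; exact: vu.
Qed.

Variable p : Y -> R.
Hypothesis Hp : forall y, 0 <= p y.

Definition F u := \sum_y p y * L u y.

Lemma F_ge0 u : 0 <= F u.
Proof. by apply: sumr_ge0 => y _; apply: mulr_ge0. Qed.

Section Step.
Variable u : 'I_d -> R.
Variable sel : Y -> 'I_N.+1.
Hypothesis Hsel : forall y, (y, sel y) \in act u.

Definition c w y := dot (a y (sel y)) w.
Definition r w (k : Y * 'I_N.+1) := dot (a k.1 k.2) w - c w k.1.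
Definition s w := \sum_y p y * c w y.

Lemma Lsel y : L u y = aff y (sel y) u.
Proof. by have := Hsel y; rewrite actP => /eqP. Qed.

Lemma claimA w t y : Wof (act u) w ->
  (forall j, (y, j) \notin act u -> aff y j (vadd u t w) <= L u y + t * c w y) ->
  L (vadd u t w) y = L u y + t * c w y.
Proof.
move=> Ww H; apply/eqP; rewrite eq_le; apply/andP; split.
- have [j ->] := Hex (vadd u t w) y.
  case: (boolP ((y, j) \in act u)) => hj; last exact: H.
  rewrite aff_vadd /c (Ww y j (sel y) hj (Hsel y)).
  by move: hj; rewrite actP => /eqP <-.
- by rewrite Lsel /c -aff_vadd Hle.
Qed.

Lemma F_vadd w t : (forall y, L (vadd u t w) y = L u y + t * c w y) ->
  F (vadd u t w) = F u + t * s w.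
Proof.
move=> H; rewrite /F /s mulr_sumr -big_split; apply: eq_bigr => y _.
by rewrite H mulrDr mulrCA.
Qed.

Lemma hit w : Wof (act u) w -> (exists k, k \notin act u /\ 0 < r w k) ->
  exists t, 0 <= t /\ act u \proper act (vadd u t w) /\
     forall y, L (vadd u t w) y = L u y + t * c w y.
Proof.
move=> Ww [k0 [k0n k0r]].
pose gap (k : Y * 'I_N.+1) := L u k.1 - aff k.1 k.2 u.
have [ks [[ksn ksr] ksmin]] := fin_min (fun k => gap k / r w k)
   (ex_intro (fun k => k \notin act u /\ 0 < r w k) k0 (conj k0n k0r)).
set t := gap ks / r w ks.
have gap0 k : 0 <= gap k by rewrite /gap subr_ge0 Hle.
have t0 : 0 <= t by apply: divr_ge0 => //; apply: ltW.
have Hc : forall y, L (vadd u t w) y = L u y + t * c w y.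
  move=> y; apply: claimA => // j hj.
  rewrite aff_vadd.
  have : t * r w (y, j) <= gap (y, j).
    case: (ltP 0 (r w (y, j))) => hr.
      by rewrite -ler_pdivlMr //; apply: ksmin.
    apply: le_trans (gap0 _); exact: mulr_ge0_le0.
  rewrite /r /gap /= mulrBr; lra.
exists t; split => //; split => //.
rewrite properE; apply/andP; split.
  apply/subsetP => -[y i] hi; rewrite actP Hc aff_vadd.
  have := hi; rewrite actP => /eqP ->.
  by move: (Ww y i (sel y) hi (Hsel y)); rewrite /c => ->.
apply/subsetPn; exists ks => //.
rewrite inE Hc aff_vadd.
have : t * r w ks = gap ks by rewrite /t divfK // gt_eqF.
rewrite /r /gap mulrBr => e; apply/eqP; lra.
Qed.

Lemma unbounded w : Wof (act u) w -> s w < 0 -> exists k, k \notin act u /\ 0 < r w k.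
Proof.
move=> Ww sn.
case: (pselect (exists k, k \notin act u /\ 0 < r w k)) => // none; exfalso.
set t := (F u + 1) / (- s w).
have t0 : 0 <= t by apply: divr_ge0; [have := F_ge0 u; lra | lra].
have Hc : forall y, L (vadd u t w) y = L u y + t * c w y.
  move=> y; apply: claimA => // j hj.
  rewrite aff_vadd.
  have hr : r w (y, j) <= 0.
    case: (ltP 0 (r w (y, j))) => // hr; exfalso; apply: none; by exists (y, j).
  have : t * r w (y, j) <= 0 by apply: mulr_ge0_le0.
  have := Hle u y j.
  rewrite /r /= mulrBr; lra.
have := F_ge0 (vadd u t w).
have e : t * s w = - (F u + 1).
  by rewrite /t invrN mulrN mulNr divfK // lt_eqF.
rewrite F_vadd // e; lra.
Qed.

Lemma dir w : Wof (act u) w -> s w <= 0 ->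
  (s w < 0 \/ exists k, k \notin act u /\ 0 < r w k) ->
  exists u', act u \proper act u' /\ F u' <= F u.
Proof.
move=> Ww sle H.
have Hk : exists k, k \notin act u /\ 0 < r w k.
  by case: H => // sl; apply: unbounded.
have [t [t0 [pr Hc]]] := hit Ww Hk.
exists (vadd u t w); split => //.
rewrite F_vadd //; have : t * s w <= 0 by apply: mulr_ge0_le0.
lra.
Qed.

End Step.

Lemma step u : ~ vertex u -> exists u', act u \proper act u' /\ F u' <= F u.
Proof.
move=> nv.
have [[v [Wv nLv]]|none] := pselect (exists v, Wof (act u) v /\ ~ Lam v); last first.
  exfalso; apply: nv => v Wv; case: (pselect (Lam v)) => // nL; exfalso; apply: none; by exists v.
have [sel Hsel] : {sel : Y -> 'I_N.+1 & forall y, (y, sel y) \in act u}.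
  apply: (@choice Y 'I_N.+1 (fun y i => (y, i) \in act u)) => y; have [i Hi] := Hex u y; exists i; by rewrite actP Hi eqxx.
have [y [i [j nij]]] : exists y i j, dot (a y i) v <> dot (a y j) v.
  case: (pselect (exists y i j, dot (a y i) v <> dot (a y j) v)) => // h.
  exfalso; apply: nLv => y i j.
  case: (pselect (dot (a y i) v = dot (a y j) v)) => // h'.
  by exfalso; apply: h; exists y, i, j.
have [j0 [hj0 nj0]] : exists j0, (y, j0) \notin act u /\ r sel v (y, j0) != 0.
  have [ei|ni] := pselect (dot (a y i) v = c sel v y).
    exists j; split; last by rewrite /r subr_eq0 -ei; apply/eqP => e; apply: nij.
    apply/negP => hj; apply: nij; rewrite ei; exact: (Wv y (sel y) j (Hsel y) hj).
  exists i; split; last by rewrite /r subr_eq0; apply/eqP.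
  apply/negP => hi; apply: ni; exact: (Wv y i (sel y) hi (Hsel y)).
have Wn : Wof (act u) (fun k => - v k).
  by move=> y1 i1 j1 h1 h2; rewrite !dot_opp (Wv y1 i1 j1 h1 h2).
have sN : s sel (fun k => - v k) = - s sel v.
  by rewrite /s -sumrN; apply: eq_bigr => y1 _; rewrite /c dot_opp mulrN.
have rN k : r sel (fun k => - v k) k = - r sel v k.
  by rewrite /r /c !dot_opp opprB opprK addrC.
case: (ltgtP (s sel v) 0) => hs.
- by apply: (dir Hsel Wv); [apply: ltW | left].
- apply: (dir Hsel Wn); rewrite sN; [lra | left; lra].
case: (ltgtP (r sel v (y, j0)) 0) => hr.
- apply: (dir Hsel Wn); rewrite ?sN ?hs; [lra | right; exists (y, j0); rewrite rN; split => //; lra].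
- apply: (dir Hsel Wv); rewrite ?hs //; right; by exists (y, j0).
- by move: nj0; rewrite hr eqxx.
Qed.

Lemma descent u : exists u', vertex u' /\ F u' <= F u.
Proof.
suff H : forall m u, (#|~: act u| <= m)%N -> exists u', vertex u' /\ F u' <= F u.
  exact: (H _ u (leqnn _)).
elim=> [|m IH] u0 hm; (case: (pselect (vertex u0)) => [vu|nv]; first by exists u0).
- have [u1 [pr _]] := step nv.
  rewrite -properC in pr; have := proper_card pr.
  by rewrite leqn0 in hm; rewrite (eqP hm).
- have [u1 [pr Fle]] := step nv.
  rewrite -properC in pr; have hc := proper_card pr.
  have [u2 [v2 F2]] := IH u1 (leq_trans hc hm).
  by exists u2; split => //; apply: le_trans Fle.
Qed.
End Core.

Section Final.
Variables (R : realType) (Y : finType) (d N : nat).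
Variable a : Y -> 'I_N.+1 -> 'I_d -> R.
Variable b : Y -> 'I_N.+1 -> R.
Variable L : ('I_d -> R) -> Y -> R.
Hypothesis Hnn : forall u y, 0 <= L u y.
Hypothesis Hle : forall u y i, aff a b y i u <= L u y.
Hypothesis Hex : forall u y, exists i, L u y = aff a b y i u.

Definition Sv (P : {set Y * 'I_N.+1}) := exists u, vertex a b L u /\ act a b L u = P.

Definition phi (P : {set Y * 'I_N.+1}) : 'I_d -> R :=
  match pselect (Sv P) with
  | left h => sval (cid h)
  | right _ => fun _ => 0
  end.

Lemma phiP P : Sv P -> vertex a b L (phi P) /\ act a b L (phi P) = P.
Proof. by rewrite /phi; case: pselect => // h _; exact: (svalP (cid h)). Qed.

Definition ell (P : {set Y * 'I_N.+1}) (y : Y) := L (phi P) y.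

Lemma good p : (forall y, 0 <= p y) -> forall u,
  exists P, Sv P /\ eloss p (ell P) <= eloss p (L u).
Proof.
move=> Hp u.
have [u' [vu' Fu']] := descent Hnn Hle Hex Hp u.
have SP : Sv (act a b L u') by exists u'.
exists (act a b L u'); split => //.
have [_ ep] := phiP SP.
suff -> : eloss p (ell (act a b L u')) = eloss p (L u') by exact: Fu'.
apply: eq_bigr => y _; rewrite /ell (vertex_same Hnn Hle Hex y vu') // ep subxx; done.
Qed.

Lemma core_embeds : exists (Rep : finType) (ell : Rep -> Y -> R),
  (forall r y, 0 <= ell r y) /\ embeds L ell.
Proof.
exists ({set Y * 'I_N.+1} : finType), ell; split; first by move=> r y; apply: Hnn.
have minP : forall p, simplex p -> exists P, Sv P /\
     (forall P', Sv P' -> eloss p (ell P) <= eloss p (ell P')) /\ in_prop L p (phi P).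
  move=> p [Hp _].
  have [P0 [S0 _]] := good Hp (fun _ => 0).
  have [P [SP Pmin]] := fin_min (fun P => eloss p (ell P)) (ex_intro _ P0 S0).
  exists P; split => //; split => // u.
  have [P' [SP' le']] := good Hp u.
  exact: le_trans (Pmin _ SP') le'.
split.
  by move=> p sp; have [P [_ [_ ip]]] := minP p sp; exists (phi P).
exists Sv, phi; split.
  move=> p sp; have [P [SP [_ ip]]] := minP p sp; exists P; split => // r'.
  exact: ip.
split.
  move=> r1 r2 S1 S2 e; have [_ e1] := phiP S1; have [_ e2] := phiP S2.
  by rewrite -e1 -e2 e.
split; first by [].
move=> p r sp Sr; split.
- move=> ir u; have [Hp _] := sp.
  have [P' [SP' le']] := good Hp u.
  exact: le_trans (ir P') le'.
- by move=> ip r'; apply: ip.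
Qed.
End Final.

Theorem theorem3 (R : realType) (Y : finType) (d : nat)
    (L : ('I_d -> R) -> Y -> R) :
  (forall u y, 0 <= L u y) ->
  polyhedral L ->
  exists (Rep : finType) (ell : Rep -> Y -> R),
    (forall r y, 0 <= ell r y) /\ embeds L ell.
Proof.
move=> Hnn Hpoly.
have H1 : forall y, exists t : nat * (nat -> 'I_d -> R) * (nat -> R),
    forall u, (forall m, \sum_(k < d) t.1.2 m k * u k + t.2 m <= L u y) /\
      exists m, (m <= t.1.1)%N /\ L u y = \sum_(k < d) t.1.2 m k * u k + t.2 m.
  move=> y; have [n [A [B H]]] := Hpoly y.
  exists (n, (fun m => A (inord m)), (fun m => B (inord m))) => u /=.
  have [H1 [i Hi]] := H u; split.
  - by move=> m; exact: H1.
  - by exists i; split; [rewrite -ltnS ltn_ord | rewrite inord_val].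
have [g Hg] := choice H1.
pose N := (\max_(y : Y) (g y).1.1)%N.
pose a y (i : 'I_N.+1) := (g y).1.2 i.
pose b y (i : 'I_N.+1) := (g y).2 i.
apply: (core_embeds (a:=a) (b:=b) Hnn).
- by move=> u y i; rewrite /aff /dot; exact: ((Hg y u).1 i).
- move=> u y; have [_ [m [hm e]]] := Hg y u.
  have hmN : (m < N.+1)%N by rewrite ltnS (leq_trans hm) // (leq_bigmax y).
  by exists (Ordinal hmN); rewrite /aff /dot e.
Qed.
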